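(* Let $G_1,\dots,G_k$ be connected graphs, each with at least $2$ vertices. Then $$\gamma(G_1\times G_2\times\cdots\times G_k)=\frac{1}{\sum_{i=1}^k \frac{1}{\gamma(G_i)}}.$$
   Context: For a finite simple undirected graph $G$ with $n$ vertices, let $\mathcal{F}=\{x\in\mathbb{R}^{V(G)} : \sum_{v} x_v = 0,\ \|x\|_\infty = 1\}$, for $x\in\mathcal{F}$ let $\gamma_x(G)=\max_{uv\in E(G)}|x_u-x_v|$, and $\gamma(G)=\min_{x\in\mathcal{F}}\gamma_x(G)$. The Cartesian product $G_1\times\cdots\times G_k$ has vertex set $V(G_1)\times\cdots\times V(G_k)$, with $(u_1,\dots,u_k)\sim(v_1,\dots,v_k)$ iff there is exactly one index $i$ with $u_i\sim v_i$ in $G_i$ and $u_j=v_j$ for all $j\ne i$. *)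

(* Defs.v *)
From HB Require Import structures.
From mathcomp Require Import all_boot all_order all_algebra.
From mathcomp Require Import boolp classical_sets reals.
Set Implicit Arguments. Unset Strict Implicit. Unset Printing Implicit Defensive.
Import Order.TTheory GRing.Theory Num.Theory.
Local Open Scope ring_scope.
Local Open Scope classical_set_scope.

(* A finite simple graph: vertex type T : finType, edge relation e : rel T,
   assumed symmetric and irreflexive (as hypotheses of the theorem). *)

Section Gamma.
Variables (R : realType) (T : finType) (e : rel T).

Definition gamma_x (x : T -> R) : R :=
  \big[Order.max/0]_(p : T * T | e p.1 p.2) `|x p.1 - x p.2|.

Definition supnorm (x : T -> R) : R := \big[Order.max/0]_(v : T) `|x v|.

Definition feasible (x : T -> R) : Prop :=
  \sum_(v : T) x v = 0 /\ supnorm x = 1.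

(* gamma(G) = min_{x in F} gamma_x(G) (the minimum is attained, so inf = min) *)
Definition gamma : R := inf [set gamma_x x | x in feasible].
End Gamma.

Definition cart_rel (k : nat) (T : 'I_k -> finType) (e : forall i, rel (T i))
  : rel {dffun forall i : 'I_k, T i} :=
  fun u v => [exists i : 'I_k, e i (u i) (v i) &&
                [forall j : 'I_k, (j != i) ==> (u j == v j)]].

(* Main.v *)
Require Import Defs.
From mathcomp Require Import lra.
From HB Require Import structures.
From mathcomp Require Import all_boot all_order all_algebra.
From mathcomp Require Import boolp classical_sets reals.
Set Implicit Arguments. Unset Strict Implicit. Unset Printing Implicit Defensive.
Import Order.TTheory GRing.Theory Num.Theory.
Local Open Scope ring_scope.

Section BigMax.
Variables (R : realType) (I : finType).

Lemma bmax_ge0 (P : pred I) (F : I -> R) : 0 <= \big[Order.max/0]_(i | P i) F i.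
Proof. by apply: (big_rec (fun y => 0 <= y)) => // i y _ hy; rewrite le_max hy orbT. Qed.

Lemma bmax_le (P : pred I) (F : I -> R) c : 0 <= c -> (forall i, P i -> F i <= c) ->
  \big[Order.max/0]_(i | P i) F i <= c.
Proof.
move=> c0 h; apply: (big_ind (fun y => y <= c)) => // a b ha hb.
by rewrite ge_max ha hb.
Qed.

Lemma le_bmax (P : pred I) (F : I -> R) i : P i -> F i <= \big[Order.max/0]_(i | P i) F i.
Proof. by move=> Pi; rewrite (bigD1 i) //= le_max lexx. Qed.

Lemma bmax_attain (P : pred I) (F : I -> R) :
  \big[Order.max/0]_(i | P i) F i = 0 \/
  exists2 i, P i & \big[Order.max/0]_(i | P i) F i = F i.
Proof.
apply: (big_rec (fun y => y = 0 \/ exists2 i, P i & y = F i)); first by left.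
move=> i y Pi [->|[j Pj ->]].
  by case: (leP (F i) 0) => h; [left|right; exists i].
by case: (leP (F i) (F j)) => h; right; [exists j|exists i].
Qed.
End BigMax.

Section Single.
Local Open Scope classical_set_scope.
Variables (R : realType) (T : finType) (e : rel T).

Lemma gx_edge (x : T -> R) a b : e a b -> `|x a - x b| <= gamma_x e x.
Proof. by move=> h; apply: (@le_bmax R _ (fun p : T * T => e p.1 p.2) _ (a, b)). Qed.

Lemma gx_ge0 (x : T -> R) : 0 <= gamma_x e x.
Proof. exact: bmax_ge0. Qed.

Lemma gx_le (x : T -> R) (c : R) : 0 <= c -> (forall a b, e a b -> `|x a - x b| <= c) ->
  gamma_x e x <= c.
Proof. by move=> c0 h; apply: bmax_le => // -[a b] /= /h. Qed.

Lemma sn_ge (x : T -> R) v : `|x v| <= supnorm x.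
Proof. exact: (@le_bmax R _ xpredT). Qed.

Lemma sn_attain (x : T -> R) : supnorm x = 1 -> exists v, `|x v| = 1.
Proof.
rewrite /supnorm; case: (bmax_attain xpredT (fun v => `|x v|)) => [->|[v _ ->]].
  by move=> /eqP; rewrite eq_sym oner_eq0.
by move=> h; exists v.
Qed.

Let S := [set gamma_x e x | x in @feasible R T].

Lemma S_lb : has_lbound S.
Proof. by exists 0 => _ [x _ <-]; apply: gx_ge0. Qed.

Lemma gamma_le (x : T -> R) : feasible x -> gamma R e <= gamma_x e x.
Proof. by move=> fx; apply: (ge_inf S_lb); exists x. Qed.

Lemma gamma_ge0 (x : T -> R) : feasible x -> 0 <= gamma R e.
Proof. by move=> fx; apply: lb_le_inf; [exists (gamma_x e x), x|move=> _ [y _ <-]; apply: gx_ge0]. Qed.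

Lemma gamma_approx (x : T -> R) eps : feasible x -> 0 < eps ->
  exists2 y, feasible y & gamma_x e y < gamma R e + eps.
Proof.
move=> fx ep; have [z [y fy <-] h] := inf_adherent ep (conj (ex_intro _ (gamma_x e x) (ex_intro2 _ _ x fx erefl)) S_lb).
by exists y.
Qed.

Lemma gamma_bound (y : T -> R) (t : R) : \sum_v y v = 0 -> 0 <= t ->
  (forall a b, e a b -> `|y a - y b| <= t) -> forall v, gamma R e * `|y v| <= t.
Proof.
move=> sy t0 hy v.
have [s0|sp] := eqVneq (supnorm y) 0.
  have : `|y v| <= 0 by rewrite -s0 sn_ge.
  by rewrite normr_le0 => /eqP ->; rewrite normr0 mulr0.
have s0 : 0 < supnorm y by rewrite lt_def sp; apply: bmax_ge0.
pose z := fun v => y v / supnorm y.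
have fz : feasible z.
  split; first by rewrite /z -mulr_suml sy mul0r.
  apply/le_anti/andP; split.
    apply: bmax_le => // w _; rewrite /z normrM (@gtr0_norm _ (supnorm y)^-1) ?invr_gt0 //.
    by rewrite ler_pdivrMr // mul1r sn_ge.
  case: (bmax_attain xpredT (fun v => `|y v|)) => [/eqP|[w _ hw]].
    by rewrite -/(supnorm y) (negbTE sp).
  apply: le_trans (sn_ge z w); rewrite /z normrM (@gtr0_norm _ (supnorm y)^-1) ?invr_gt0 //.
  by rewrite -/(supnorm y) in hw; rewrite -hw divff.
have g0 := gamma_ge0 fz.
have gl : gamma R e <= t / supnorm y.
  apply: le_trans (gamma_le fz) _; apply: gx_le; first by rewrite divr_ge0 // ltW.
  move=> a b /hy hab; rewrite /z -mulrBl normrM (@gtr0_norm _ (supnorm y)^-1) ?invr_gt0 //.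
  by rewrite ler_pM2r ?invr_gt0.
apply: le_trans (_ : gamma R e * supnorm y <= t).
  by rewrite ler_wpM2l // sn_ge.
by rewrite -ler_pdivlMr.
Qed.
End Single.

Section Single2.
Local Open Scope classical_set_scope.
Variables (R : realType) (T : finType) (e : rel T).

Lemma feas_exists : (1 < #|T|)%N -> exists x : T -> R, feasible x.
Proof.
move=> /card_gt1P[a [b [_ _ ab]]].
exists (fun v => (v == a)%:R - (v == b)%:R); split.
  rewrite big_split /= sumrN (bigD1 a) //= eqxx big1; last by move=> v /negbTE ->.
  rewrite (bigD1 b) //= eqxx big1; last by move=> v /negbTE ->.
  by rewrite !addr0 subrr.
apply/le_anti/andP; split.
  apply: bmax_le => // v _; case: (v == a); case: (v == b) => /=;
  by rewrite ?subrr ?subr0 ?sub0r ?normrN ?normr1 ?normr0.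
apply: le_trans (sn_ge _ a); rewrite eqxx (negbTE ab) subr0 normr1 //.
Qed.

Lemma path_bound (x : T -> R) a p : path e a p ->
  `|x a - x (last a p)| <= (size p)%:R * gamma_x e x.
Proof.
elim: p a => [|b p IH] a /=; first by rewrite subrr normr0 mul0r.
move=> /andP[eab pb]; rewrite -add1n natrD mulrDl mul1r.
have -> : x a - x (last b p) = (x a - x b) + (x b - x (last b p)).
  by rewrite addrA subrK.
apply: le_trans (ler_normD _ _) _.
by rewrite lerD // ?gx_edge // IH.
Qed.

Lemma gamma_pos : (forall u v, connect e u v) -> (1 < #|T|)%N -> 0 < gamma R e.
Proof.
move=> conn T2; have [x0 fx0] := feas_exists T2.
have lb : forall x : T -> R, feasible x -> #|T|%:R^-1 <= gamma_x e x.
  move=> x [sx snx]; have [v0 hv0] := sn_attain snx.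
  have [v1 hv1] : exists v1, x v1 * x v0 <= 0.
    apply/not_existsP => hn.
    have : 0 < \sum_v x v * x v0.
      have [v _] : exists v, v \in T by exists v0.
      rewrite (bigD1 v) //= ltr_pwDl //; first by rewrite ltNge; apply/negP/hn.
      by apply: sumr_ge0 => w _; rewrite ltW // ltNge; apply/negP/hn.
    by rewrite -mulr_suml sx mul0r ltxx.
  have h1 : 1 <= `|x v0 - x v1|.
    rewrite -hv0; case: (lerP 0 (x v0)) => h0.
      have e0 : x v0 = 1 by rewrite -hv0 ger0_norm.
      rewrite ger0_norm // ger0_norm; last by nra.
      by nra.
    have e0 : x v0 = -1 by rewrite -hv0 ltr0_norm // opprK.
    rewrite ltr0_norm // ler0_norm; last by nra.
    by nra.
  have [p pp lp] := connectP (conn v0 v1).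
  rewrite lp in h1; move: h1.
  case: (shortenP pp) => p' pp' up' _ h1.
  have g0 := gx_ge0 e x.
  have sz : (size p' <= #|T|)%N.
    have := max_card (mem (v0 :: p')); rewrite (card_uniqP up') /=.
    by move=> /ltnW.
  have := le_trans h1 (path_bound x pp'); move=> h2.
  have Tp : (0 < #|T|)%N by apply: leq_trans T2.
  rewrite -[_^-1]mul1r ler_pdivrMr ?ltr0n // mulrC.
  by apply: le_trans h2 _; rewrite ler_wpM2r // ler_nat.
apply: lt_le_trans (_ : #|T|%:R^-1 <= _).
  by rewrite invr_gt0 ltr0n; apply: leq_trans T2.
apply: lb_le_inf; first by exists (gamma_x e x0), x0.
by move=> _ [x fx <-]; apply: lb.
Qed.
End Single2.

Section Prod.
Variables (R : realType) (k : nat) (T : 'I_k -> finType) (e : forall i, rel (T i)).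
Local Notation V := {dffun forall i : 'I_k, T i}.

Definition upd (w : V) (j : 'I_k) (a : T j) : V := @finfun _ _ (dfwith (fun i => w i) a).
Arguments upd w j a : clear implicits.

Lemma upd_in w j a : upd w j a j = a.
Proof. by rewrite /upd ffunE dfwith_in. Qed.

Lemma upd_out w j a i : j != i -> upd w j a i = w i.
Proof. by move=> ji; rewrite /upd ffunE dfwith_out. Qed.

Lemma upd_id w j : upd w j (w j) = w.
Proof.
apply/ffunP => i; case: (eqVneq j i) => [<-|ji]; first by rewrite upd_in.
by rewrite upd_out.
Qed.

Lemma upd_upd w j a b : upd (upd w j a) j b = upd w j b.
Proof.
apply/ffunP => i; case: (eqVneq j i) => [<-|ji]; first by rewrite !upd_in.
by rewrite !upd_out.
Qed.

Lemma cart_upd w j a b : e a b -> cart_rel e (upd w j a) (upd w j b).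
Proof.
move=> hab; apply/existsP; exists j; rewrite !upd_in hab /=.
by apply/forallP => i; apply/implyP => ij; rewrite !upd_out // eq_sym.
Qed.

Lemma upd_eq_self w j a : (upd w j a == w) = (w j == a).
Proof.
apply/eqP/eqP => [<-|<-]; first by rewrite upd_in.
exact: upd_id.
Qed.

Definition Pj (u : V) (j : nat) (w : V) := [forall i : 'I_k, (j <= i)%N ==> (w i == u i)].

Lemma split_sum u (j : 'I_k) (F : V -> R) :
  \sum_(w | Pj u j.+1 w) F w = \sum_(a : T j) \sum_(w | Pj u j w) F (upd w j a).
Proof.
rewrite (partition_big (fun w : V => w j) xpredT) //.
apply: eq_bigr => a _.
rewrite (reindex_onto (fun w => upd w j a) (fun w => upd w j (u j))); last first.
  by move=> w /andP[_ /eqP <-]; rewrite upd_upd upd_id.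
apply: eq_bigl => w; rewrite upd_in eqxx andbT upd_upd upd_eq_self.
apply/andP/forallP => [[/forallP hP /eqP hj] i|hP].
  apply/implyP => ji; case: (eqVneq j i) => [<-|nji]; first by rewrite hj.
  move: (hP i) => /implyP; rewrite upd_out // => -> //.
  by rewrite ltn_neqAle ji andbT; apply/eqP => /val_inj; apply/eqP.
split; last by move: (hP j) => /implyP ->.
apply/forallP => i; apply/implyP => ji; rewrite upd_out; last first.
  by apply/eqP => jie; rewrite jie ltnn in ji.
by move: (hP i) => /implyP -> //; apply: ltnW.
Qed.

Lemma coord_sum (j : 'I_k) (f : T j -> R) (a0 : T j) :
  \sum_(w : V) f (w j) = (\sum_(w : V | w j == a0) 1) * \sum_a f a.
Proof.
rewrite (partition_big (fun w : V => w j) xpredT) // mulr_sumr.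
apply: eq_bigr => a _; rewrite mulrC.
rewrite (eq_bigr (fun _ => f a * 1)); last by move=> w /andP[_ /eqP ->]; rewrite mulr1.
rewrite -mulr_sumr; congr (_ * _).
rewrite (reindex_onto (fun w => upd w j a) (fun w => upd w j a0)); last first.
  by move=> w /andP[_ /eqP <-]; rewrite upd_upd upd_id.
by apply: eq_bigl => w; rewrite upd_in eqxx upd_upd upd_eq_self.
Qed.
End Prod.
Arguments upd {k T} w j a.

Section LB.
Variables (R : realType) (k : nat) (T : 'I_k -> finType) (e : forall i, rel (T i)).
Local Notation V := {dffun forall i : 'I_k, T i}.

Lemma prod_lb (x : V -> R) : (forall i : 'I_k, 0 < gamma R (@e i)) -> feasible x ->
  1 <= gamma_x (cart_rel e) x * \sum_(i < k) (gamma R (@e i))^-1.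
Proof.
move=> gp [sx snx].
set t := gamma_x (cart_rel e) x.
have t0 : 0 <= t := gx_ge0 _ _.
have [u hu] := sn_attain snx.
pose G (j : nat) := \sum_(w | Pj u j w) x w.
pose C (j : nat) := \sum_(w | Pj u j w) (1 : R).
pose g (j : nat) := G j / C j.
have Cp : forall j, 0 < C j.
  move=> j; rewrite /C (bigD1 u) /=; last by apply/forallP => i; apply/implyP.
  have : 0 <= \sum_(w | Pj u j w && (w != u)) (1:R) by apply: sumr_ge0.
  lra.
have P0 : forall w, Pj u 0 w = (w == u).
  move=> w; apply/forallP/eqP => [h|->]; last by move=> i; apply/implyP.
  by apply/ffunP => i; apply/eqP; apply: (implyP (h i)).
have Pk : forall w, Pj u k w.
  by move=> w; apply/forallP => i; apply/implyP; rewrite leqNgt ltn_ord.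
have g0 : g 0%N = x u.
  by rewrite /g /G /C !(big_pred1 u) // divr1.
have gk : g k = 0.
  by rewrite /g /G (eq_bigl xpredT) // sx mul0r.
have step : forall j : 'I_k, `|g j - g j.+1| <= t / gamma R (@e j).
  move=> j.
  pose H (a : T j) := \sum_(w | Pj u j w) x (upd w j a).
  have GS : G j.+1 = \sum_a H a by rewrite /G split_sum.
  have CS : C j.+1 = C j *+ #|T j|.
    by rewrite /C split_sum sumr_const.
  have Hu : H (u j) = G j.
    apply: eq_bigr => w /forallP /(_ j) /implyP /(_ (leqnn _)) /eqP <-.
    by rewrite upd_id.
  have nT : (0 < #|T j|)%N by apply/card_gt0P; exists (u j).
  pose n := (#|T j|%:R : R).
  have np : 0 < n by rewrite ltr0n.
  pose y (a : T j) := H a - G j.+1 / n.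
  have sy : \sum_a y a = 0.
    rewrite sumrB -GS sumr_const -mulr_natr -/n -mulrA mulVf ?mulr1 ?subrr //.
    by rewrite gt_eqF.
  have ey : forall a b, @e j a b -> `|y a - y b| <= C j * t.
    move=> a b hab; rewrite /y opprB addrA subrK /H -sumrB.
    apply: le_trans (ler_norm_sum _ _ _) _.
    rewrite /C mulr_suml; apply: ler_sum => w _; rewrite mul1r.
    exact/gx_edge/cart_upd.
  have := @gamma_bound _ _ (@e j) _ _ sy (mulr_ge0 (ltW (Cp j)) t0) ey (u j).
  have -> : y (u j) = C j * (g j - g j.+1).
    rewrite /y Hu /g CS -mulr_natr -/n mulrBr; congr (_ - _).
      by rewrite mulrC -mulrA mulVf ?mulr1 // gt_eqF.
    rewrite invfM [C j * _]mulrC -!mulrA; congr (_ * _).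
    by rewrite mulrCA mulVf ?mulr1 // gt_eqF.
  rewrite normrM gtr0_norm // mulrCA ler_pM2l // => h.
  by rewrite ler_pdivlMr // mulrC.
have : `|g 0%N - g k| <= \sum_(j < k) t / gamma R (@e j).
  rewrite distrC -(telescope_sumr _ (leq0n k)) big_mkord.
  apply: le_trans (ler_norm_sum _ _ _) _; apply: ler_sum => j _.
  by rewrite distrC step.
rewrite g0 gk subr0 hu mulr_sumr.
by [].
Qed.
End LB.

Section UB.
Variables (R : realType) (k : nat) (T : 'I_k -> finType) (e : forall i, rel (T i)).
Local Notation V := {dffun forall i : 'I_k, T i}.

Lemma prod_ub (d : R) : (0 < k)%N -> 0 < d ->
  (forall i : 'I_k, 0 < gamma R (@e i)) ->
  (forall i : 'I_k, exists y : T i -> R, feasible y) ->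
  exists2 X : V -> R, feasible X &
    gamma_x (cart_rel e) X <= (1 + d) * (\sum_(i < k) (gamma R (@e i))^-1)^-1.
Proof.
move=> kp dp gp fe.
pose c (i : 'I_k) := gamma R (@e i) * (1 + d).
have cp : forall i, 0 < c i by move=> i; rewrite /c mulr_gt0 //; lra.
have hex : forall i : 'I_k, exists p : (T i -> R) * T i,
    [/\ feasible p.1, gamma_x (@e i) p.1 <= c i & `|p.1 p.2| = 1].
  move=> i; have [y0 fy0] := fe i.
  have ep : 0 < gamma R (@e i) * d by rewrite mulr_gt0.
  have [y fy hy] := gamma_approx (@e i) fy0 ep.
  have [v hv] := sn_attain (proj2 fy).
  exists (y, v); split => //=; rewrite /c mulrDr mulr1; exact: ltW.
pose p i := sval (cid (hex i)).
have hp : forall i, [/\ feasible (p i).1, gamma_x (@e i) (p i).1 <= c i & `|(p i).1 (p i).2| = 1].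
  by move=> i; rewrite /p; case: (cid _).
pose S := \sum_(i < k) (c i)^-1.
have Sp : 0 < S.
  rewrite /S (bigD1 (Ordinal kp)) //=.
  have : 0 <= \sum_(i < k | i != Ordinal kp) (c i)^-1.
    by apply: sumr_ge0 => i _; rewrite invr_ge0 ltW.
  have := cp (Ordinal kp); rewrite -invr_gt0; lra.
pose l i := (c i)^-1 / S.
have lp : forall i, 0 <= l i by move=> i; rewrite /l divr_ge0 // ?invr_ge0 ltW.
have sl : \sum_i l i = 1 by rewrite /l -mulr_suml -/S mulfV // gt_eqF.
pose s i := (p i).1 (p i).2.
have ss : forall i, s i * s i = 1.
  move=> i; have [_ _ h] := hp i.
  by rewrite -expr2 -(ger0_norm (sqr_ge0 (s i))) expr2 normrM h mulr1.
have ns : forall i, `|s i| = 1 by move=> i; have [] := hp i.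
pose X (v : V) := \sum_i l i * s i * (p i).1 (v i).
exists X.
  split.
    rewrite /X exchange_big /= big1 // => i _.
    rewrite -mulr_sumr (coord_sum _ ((p i).2)).
    by have [[-> _] _ _] := hp i; rewrite !mulr0.
  apply/le_anti/andP; split.
    apply: bmax_le => // v _; rewrite /X -sl.
    apply: le_trans (ler_norm_sum _ _ _) _; apply: ler_sum => i _.
    rewrite normrM (normrM (l i)) ns mulr1 (ger0_norm (lp i)).
    have [[_ h1] _ _] := hp i.
    by rewrite -[leRHS]mulr1 ler_wpM2l // -h1 sn_ge.
  pose vs : V := @finfun _ _ (fun i => (p i).2).
  apply: le_trans (sn_ge _ vs); rewrite /X.
  rewrite (eq_bigr l); first by rewrite sl normr1.
  by move=> i _; rewrite ffunE -/(s i) -mulrA ss mulr1.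
apply: gx_le; first by rewrite mulr_ge0 ?invr_ge0 ?sumr_ge0 // => [|i _];
  [rewrite ltW // ltr_wpDr // ltW|rewrite invr_ge0 ltW].
move=> a b /existsP[i /andP[hab /forallP hj]].
rewrite /X -sumrB (bigD1 i) //= big1 ?addr0; last first.
  move=> j ji; have := implyP (hj j) ji => /eqP ->; by rewrite subrr.
rewrite -mulrBr normrM (normrM (l i)) ns mulr1 (ger0_norm (lp i)).
have [_ hg _] := hp i.
apply: le_trans (_ : l i * c i <= _).
  by rewrite ler_wpM2l //; apply: le_trans hg; apply: gx_edge.
rewrite /l mulrAC mulVf ?gt_eqF // mul1r /S.
rewrite (eq_bigr (fun i => (gamma R (@e i))^-1 * (1 + d)^-1)); last by move=> j _; rewrite /c invfM.
by rewrite -mulr_suml invfM invrK mulrC.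
Qed.
End UB.

Unset Implicit Arguments.
Set Strict Implicit.

Theorem theorem5p2 (R : realType) (k : nat) (T : 'I_k -> finType)
  (e : forall i, rel (T i)) :
  (0 < k)%N ->
  (forall i, symmetric (e i)) ->
  (forall i, irreflexive (e i)) ->
  (forall i (u v : T i), connect (e i) u v) ->
  (forall i, 1 < #|T i|)%N ->
  gamma R (cart_rel e) = (\sum_(i < k) (gamma R (e i))^-1)^-1.
Proof.
move=> kp _ _ conn card.
have gp : forall i, 0 < gamma R (e i) := fun i => @gamma_pos R _ (e i) (conn i) (card i).
have fe : forall i, exists y : T i -> R, feasible y := fun i => feas_exists R (card i).
set S := \sum_(i < k) _.
have Sp : 0 < S.
  rewrite /S (bigD1 (Ordinal kp)) //=.
  have : 0 <= \sum_(i < k | i != Ordinal kp) (gamma R (e i))^-1.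
    by apply: sumr_ge0 => i _; rewrite invr_ge0 ltW.
  have := gp (Ordinal kp); rewrite -invr_gt0; lra.
apply/le_anti/andP; split.
  apply/ler_addgt0Pr => eps ep.
  have dp : 0 < eps * S by rewrite mulr_gt0.
  have [X fX hX] := prod_ub kp dp gp fe.
  apply: le_trans (gamma_le _ fX) _; apply: le_trans hX _.
  by rewrite mulrDl mul1r -mulrA mulfV ?mulr1 // gt_eqF.
have [X fX _] := prod_ub kp ltr01 gp fe.
apply: lb_le_inf; first by exists (gamma_x (cart_rel e) X), X.
move=> _ [Y fY <-].
have := prod_lb gp fY.
by rewrite -[_^-1]mul1r ler_pdivrMr.
Qed.
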